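(* Let $d\ge2$, $n\ge1$ be integers and, for real $b,c$, let $$\rho_{bc}=a\sum_{i=0}^{d-1}|ii\rangle\langle ii|+b\sum_{i<j}|\psi^-_{ij}\rangle\langle\psi^-_{ij}|+c\sum_{i<j}|\psi^+_{ij}\rangle\langle\psi^+_{ij}|,\quad a=\frac1d\Big(1-(b+c)\frac{d(d-1)}2\Big).$$ Let $B=\big(\tfrac{1}{d(d-1)},0\big)$, $G=\big(\tfrac{3}{d(2d-1)},\tfrac{1}{d(2d-1)}\big)$, $K=\big(\tfrac1{d(d-1)},\tfrac1{d(d-1)}\big)$. If $\rho_{G}$ (the state $\rho_{bc}$ with $(b,c)=G$) is pseudo $n$-copy undistillable, then $\rho_{bc}$ is pseudo $n$-copy undistillable for every $(b,c)$ in the triangle (convex hull) $BGK$.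
   Context: $|\psi^{\pm}_{ij}\rangle=\frac1{\sqrt2}(|ij\rangle\pm|ji\rangle)$, sums over $0\le i<j\le d-1$. For a bipartite state $\rho$ on $\mathcal{H}_A\otimes\mathcal{H}_B$, $\rho^{PT}$ is the partial transpose on $\mathcal{H}_B$. $\rho$ is pseudo one-copy undistillable if $\langle\phi|\rho^{PT}|\phi\rangle\ge0$ for all $|\phi\rangle$ of Schmidt rank two; $\rho$ is pseudo $n$-copy undistillable if $\rho^{\otimes n}$, viewed as a bipartite state on $\mathcal{H}_A^{\otimes n}\otimes\mathcal{H}_B^{\otimes n}$, is pseudo one-copy undistillable. *)

(* Defs.v *)
From HB Require Import structures.
From mathcomp Require Import all_boot all_order all_algebra.
From mathcomp Require Import algC.
Set Implicit Arguments. Unset Strict Implicit. Unset Printing Implicit Defensive.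
Import Order.TTheory GRing.Theory Num.Theory.
Local Open Scope ring_scope.

(* Vectors of H_A (x) H_B, with H_A, H_B having orthonormal bases indexed by
   finite types A, B, are functions A * B -> algC (coordinates in |a b>). *)
Definition bvec (A B : finType) := (A * B)%type -> algC.
(* Operators on H_A (x) H_B: X x y = <x| X |y>. *)
Definition bop (A B : finType) := (A * B)%type -> (A * B)%type -> algC.

Definition ptrans (A B : finType) (X : bop A B) : bop A B :=
  fun x y => X (x.1, y.2) (y.1, x.2).

Definition schmidt_rank (A B : finType) (phi : bvec A B) : nat :=
  \rank (\matrix_(i < #|A|, j < #|B|) phi (enum_val i, enum_val j)).

Definition qform (A B : finType) (X : bop A B) (phi : bvec A B) : algC :=
  \sum_x \sum_y (phi x)^* * X x y * phi y.

Definition pseudo_one_copy_undistillable (A B : finType) (X : bop A B) : Prop :=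
  forall phi : bvec A B, schmidt_rank phi = 2%N -> 0 <= qform (ptrans X) phi.

(* X^{(x) n}, regrouped as a bipartite operator on H_A^{(x)n} (x) H_B^{(x)n};
   a basis vector of H_A^{(x)n} is indexed by (a_1,...,a_n). *)
Definition tens_pow (A B : finType) (n : nat) (X : bop A B)
  : bop {ffun 'I_n -> A} {ffun 'I_n -> B} :=
  fun x y => \prod_(k < n) X (x.1 k, x.2 k) (y.1 k, y.2 k).

Definition pseudo_n_copy_undistillable (A B : finType) (n : nat) (X : bop A B) : Prop :=
  pseudo_one_copy_undistillable (@tens_pow A B n X).

Definition ket (d : nat) (i j : 'I_d) : bvec 'I_d 'I_d :=
  fun x => (x == (i, j))%:R.
(* |psi^{+-}_{ij}> = (|ij> +- |ji>)/sqrt 2, sign s = 1 or -1 *)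
Definition psi (d : nat) (s : algC) (i j : 'I_d) : bvec 'I_d 'I_d :=
  fun x => (sqrtC 2)^-1 * (ket i j x + s * ket j i x).
Definition proj (A B : finType) (v : bvec A B) : bop A B :=
  fun x y => v x * (v y)^*.

Definition coef_a (d : nat) (b c : algC) : algC :=
  (d%:R)^-1 * (1 - (b + c) * (d%:R * (d%:R - 1) / 2)).

Definition rho_bc (d : nat) (b c : algC) : bop 'I_d 'I_d :=
  fun x y =>
    coef_a d b c * (\sum_(i < d) proj (ket i i) x y)
    + b * (\sum_(i < d) \sum_(j < d | (i < j)%N) proj (psi (-1) i j) x y)
    + c * (\sum_(i < d) \sum_(j < d | (i < j)%N) proj (psi 1 i j) x y).

Arguments rho_bc d b c : clear implicits.

Definition ptB (d : nat) : algC * algC := ((d%:R * (d%:R - 1))^-1, 0).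
Definition ptG (d : nat) : algC * algC :=
  (3 / (d%:R * (2 * d%:R - 1)), 1 / (d%:R * (2 * d%:R - 1))).
Definition ptK (d : nat) : algC * algC :=
  ((d%:R * (d%:R - 1))^-1, (d%:R * (d%:R - 1))^-1).

(* (b,c) lies in the convex hull of P, Q, R (real convex combinations) *)
Definition in_triangle (P Q R : algC * algC) (b c : algC) : Prop :=
  exists l1 l2 l3 : algC,
    [/\ 0 <= l1, 0 <= l2, 0 <= l3 & l1 + l2 + l3 = 1] /\
    b = l1 * P.1 + l2 * Q.1 + l3 * R.1 /\
    c = l1 * P.2 + l2 * Q.2 + l3 * R.2.

(* Main.v *)
Require Import Defs.
From mathcomp Require Import all_boot all_order all_algebra.
From mathcomp Require Import algC.
From mathcomp Require Import ring lra zify.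
Set Implicit Arguments. Unset Strict Implicit. Unset Printing Implicit Defensive.
Import Order.TTheory GRing.Theory Num.Theory.
Local Open Scope ring_scope.

Section Gen.
Variables A B : finType.

Lemma qform_ext (X Y : bop A B) (phi : bvec A B) :
  (forall x y, X x y = Y x y) -> qform X phi = qform Y phi.
Proof. by move=> H; apply: eq_bigr => x _; apply: eq_bigr => y _; rewrite H. Qed.

Lemma qform_sum (S : finType) (F : S -> bop A B) phi :
  qform (fun x y => \sum_(s : S) F s x y) phi = \sum_(s : S) qform (F s) phi.
Proof.
rewrite /qform; symmetry; rewrite exchange_big; apply: eq_bigr => x _.
rewrite exchange_big; apply: eq_bigr => y _.
by rewrite mulr_sumr mulr_suml.
Qed.

Lemma qform_scale c (X : bop A B) phi :
  qform (fun x y => c * X x y) phi = c * qform X phi.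
Proof.
rewrite /qform mulr_sumr; apply: eq_bigr => x _; rewrite mulr_sumr.
by apply: eq_bigr => y _; ring.
Qed.

Lemma ptrans_tens n (X : bop A B) x y :
  ptrans (tens_pow (n:=n) X) x y = tens_pow (n:=n) (ptrans X) x y.
Proof. by []. Qed.

Lemma tens_sum n (M : finType) (Z : M -> bop A B) x y :
  tens_pow (n:=n) (fun u v => \sum_(m : M) Z m u v) x y =
  \sum_(s : {ffun 'I_n -> M}) \prod_(k < n) Z (s k) (x.1 k, x.2 k) (y.1 k, y.2 k).
Proof. by rewrite /tens_pow bigA_distr_bigA. Qed.

End Gen.
Section Loc.
Variables A B A' B' : finType.
Variables (L : A' -> A -> algC) (M : B' -> B -> algC).

Definition loc (phi : bvec A B) : bvec A' B' :=
  fun x => \sum_(y : A * B) L x.1 y.1 * M x.2 y.2 * phi y.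

Lemma qform_loc (Y : bop A' B') phi :
  qform Y (loc phi) = \sum_(x' : A * B) \sum_(y' : A * B) (phi x')^* *
    (\sum_(x : A' * B') \sum_(y : A' * B')
        (L x.1 x'.1 * M x.2 x'.2)^* * Y x y * (L y.1 y'.1 * M y.2 y'.2)) * phi y'.
Proof.
pose G x y x' y' := (L x.1 x'.1 * M x.2 x'.2 * phi x')^* * Y x y *
   (L y.1 y'.1 * M y.2 y'.2 * phi y').
transitivity (\sum_x \sum_y \sum_x' \sum_y' G x y x' y').
  apply: eq_bigr => x _; apply: eq_bigr => y _.
  rewrite /loc rmorph_sum mulr_suml mulr_suml; apply: eq_bigr => x' _.
  by rewrite mulr_sumr.
transitivity (\sum_x \sum_x' \sum_y \sum_y' G x y x' y').
  by apply: eq_bigr => x _; rewrite exchange_big.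
rewrite exchange_big; apply: eq_bigr => x' _.
transitivity (\sum_y' \sum_x \sum_y G x y x' y').
  transitivity (\sum_x \sum_y' \sum_y G x y x' y').
    by apply: eq_bigr => x _; rewrite exchange_big.
  by rewrite [LHS]exchange_big.
apply: eq_bigr => y' _.
rewrite mulr_sumr mulr_suml; apply: eq_bigr => x _.
rewrite mulr_sumr mulr_suml; apply: eq_bigr => y _.
rewrite /G rmorphM /=; ring.
Qed.
End Loc.
Lemma sum_pair (I J : finType) (F : I * J -> algC) :
  \sum_(p : I * J) F p = \sum_(i : I) \sum_(j : J) F (i, j).
Proof. by rewrite pair_bigA; apply: eq_bigr => -[]. Qed.

Section Ker.
Variables (A B : finType) (n : nat).
Variables (la : 'I_n -> A -> A -> algC) (mb : 'I_n -> B -> B -> algC).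

Lemma prod_sum4 (G : 'I_n -> A -> B -> A -> B -> algC) :
  \prod_(k < n) \sum_a \sum_b \sum_a' \sum_b' G k a b a' b' =
  \sum_(xa : {ffun 'I_n -> A}) \sum_(xb : {ffun 'I_n -> B})
  \sum_(ya : {ffun 'I_n -> A}) \sum_(yb : {ffun 'I_n -> B})
     \prod_(k < n) G k (xa k) (xb k) (ya k) (yb k).
Proof.
rewrite bigA_distr_bigA; apply: eq_bigr => xa _.
rewrite bigA_distr_bigA; apply: eq_bigr => xb _.
rewrite bigA_distr_bigA; apply: eq_bigr => ya _.
by rewrite bigA_distr_bigA.
Qed.

Lemma kernel_tens (XG : bop A B) (x' y' : {ffun 'I_n -> A} * {ffun 'I_n -> B}) :
  \sum_(x : {ffun 'I_n -> A} * {ffun 'I_n -> B})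
  \sum_(y : {ffun 'I_n -> A} * {ffun 'I_n -> B})
    ((\prod_k la k (x.1 k) (x'.1 k)) * (\prod_k mb k (x.2 k) (x'.2 k)))^* *
      tens_pow (n:=n) XG x y *
    ((\prod_k la k (y.1 k) (y'.1 k)) * (\prod_k mb k (y.2 k) (y'.2 k))) =
  \prod_(k < n) \sum_a \sum_b \sum_a' \sum_b'
     (la k a (x'.1 k) * mb k b (x'.2 k))^* * XG (a, b) (a', b') *
     (la k a' (y'.1 k) * mb k b' (y'.2 k)).
Proof.
rewrite prod_sum4 sum_pair; apply: eq_bigr => xa _.
apply: eq_bigr => xb _.
rewrite sum_pair; apply: eq_bigr => ya _.
apply: eq_bigr => yb _ /=.
rewrite /tens_pow /= !rmorphM !rmorph_prod /=.
under [RHS]eq_bigr do rewrite rmorphM.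
rewrite !big_split /=; ring.
Qed.
End Ker.
Lemma sum_enum (T : finType) (F : T -> algC) :
  \sum_(y : T) F y = \sum_(i < #|T|) F (enum_val i).
Proof.
rewrite (reindex (@enum_val T T)) //=.
by apply: onW_bij; exact: enum_val_bij.
Qed.

Lemma schmidt_rank_loc (A B A' B' : finType) (L : A' -> A -> algC) (M : B' -> B -> algC)
  (phi : bvec A B) : (schmidt_rank (loc L M phi) <= schmidt_rank phi)%N.
Proof.
rewrite /schmidt_rank.
set P := \matrix_(i < #|A|, j < #|B|) phi (enum_val i, enum_val j).
pose Lm := \matrix_(i < #|A'|, j < #|A|) L (enum_val i) (enum_val j).
pose Mm := \matrix_(i < #|B|, j < #|B'|) M (enum_val j) (enum_val i).
have -> : \matrix_(i < #|A'|, j < #|B'|) loc L M phi (enum_val i, enum_val j)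
   = Lm *m P *m Mm.
  apply/matrixP => i j; rewrite !mxE /loc sum_pair sum_enum.
  rewrite exchange_big sum_enum /=; apply: eq_bigr => j' _.
  rewrite !mxE mulr_suml; apply: eq_bigr => i' _.
  by rewrite !mxE; ring.
exact: leq_trans (mxrankM_maxl _ _) (mxrankM_maxr _ _).
Qed.
Lemma mul_le1 m n r (U : 'M[algC]_(m, r)) (V : 'M[algC]_(r, n)) i j :
  (r <= 1)%N -> (U *m V) i j = (\sum_k U i k) * (\sum_k V k j).
Proof.
case: r U V => [|[|r]] U V // _; rewrite mxE.
  by rewrite !big_ord0 mul0r.
by rewrite !big_ord1.
Qed.

Lemma rank_le1_prod (A B : finType) (phi : bvec A B) :
  (schmidt_rank phi <= 1)%N -> exists u : A -> algC, exists v : B -> algC,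
    forall x, phi x = u x.1 * v x.2.
Proof.
rewrite /schmidt_rank.
set P := \matrix_(i < #|A|, j < #|B|) phi (enum_val i, enum_val j) => hr.
exists (fun a => \sum_k col_base P (enum_rank a) k).
exists (fun b => \sum_k row_base P k (enum_rank b)).
move=> [a b] /=; rewrite -mul_le1 // mulmx_base /P mxE.
by rewrite !enum_rankK.
Qed.
Lemma qform_ptrans_prod (A B : finType) (T : bop A B) (u : A -> algC) (v : B -> algC) :
  qform (ptrans T) (fun x => u x.1 * v x.2) = qform T (fun x => u x.1 * (v x.2)^*).
Proof.
rewrite /qform sum_pair [RHS]sum_pair; apply: eq_bigr => a1 _.
transitivity (\sum_(x2 : B) \sum_(y1 : A) \sum_(y2 : B)
   (u a1 * v x2)^* * T (a1, y2) (y1, x2) * (u y1 * v y2)).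
  apply: eq_bigr => x2 _; rewrite sum_pair; apply: eq_bigr => y1 _.
  by apply: eq_bigr => y2 _.
transitivity (\sum_(a2 : B) \sum_(b1 : A) \sum_(b2 : B)
   (u a1 * v b2)^* * T (a1, a2) (b1, b2) * (u b1 * v a2)).
  transitivity (\sum_(x2 : B) \sum_(y2 : B) \sum_(y1 : A)
   (u a1 * v x2)^* * T (a1, y2) (y1, x2) * (u y1 * v y2)).
    by apply: eq_bigr => x2 _; rewrite exchange_big.
  rewrite exchange_big; apply: eq_bigr => a2 _; exact: exchange_big.
apply: eq_bigr => a2 _; rewrite sum_pair; apply: eq_bigr => b1 _.
apply: eq_bigr => b2 _ /=.
rewrite !rmorphM /= conjCK; ring.
Qed.

Lemma psd_proj (A B : finType) (M : finType) (w : M -> algC) (p : M -> bvec A B)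
   (X : bop A B) :
  (forall m, 0 <= w m) -> (forall x y, X x y = \sum_m w m * p m x * (p m y)^*) ->
  forall phi, 0 <= qform X phi.
Proof.
move=> hw hX phi.
rewrite (qform_ext _ hX) qform_sum; apply: sumr_ge0 => m _.
have -> : qform (fun x y => w m * p m x * (p m y)^*) phi =
   w m * ((\sum_x (phi x)^* * p m x) * (\sum_x (phi x)^* * p m x)^*).
  rewrite /qform rmorph_sum mulr_suml mulr_sumr; apply: eq_bigr => x _.
  rewrite mulr_sumr mulr_sumr; apply: eq_bigr => y _.
  by rewrite !rmorphM /= conjCK; ring.
by apply: mulr_ge0 => //; exact: mul_conjC_ge0.
Qed.

Lemma psd_tens (A B : finType) (M : finType) (w : M -> algC) (p : M -> bvec A B)
   (X : bop A B) n :
  (forall m, 0 <= w m) -> (forall x y, X x y = \sum_m w m * p m x * (p m y)^*) ->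
  forall phi, 0 <= qform (tens_pow (n:=n) X) phi.
Proof.
move=> hw hX.
eapply (@psd_proj _ _ {ffun 'I_n -> M} (fun s : {ffun 'I_n -> M} => \prod_k w (s k))
   (fun s (x : {ffun 'I_n -> A} * {ffun 'I_n -> B}) => \prod_k p (s k) (x.1 k, x.2 k))).
  by move=> s; apply: prodr_ge0 => k _.
move=> x y.
have -> : tens_pow (n:=n) X x y =
   tens_pow (n:=n) (fun u v => \sum_m w m * p m u * (p m v)^*) x y.
  by apply: eq_bigr => k _; rewrite hX.
rewrite tens_sum; apply: eq_bigr => s _.
by rewrite rmorph_prod -!big_split.
Qed.
Lemma qform_extv (A B : finType) (X : bop A B) (phi psi : bvec A B) :
  (forall x, phi x = psi x) -> qform X phi = qform X psi.
Proof. by move=> H; apply: eq_bigr => x _; apply: eq_bigr => y _; rewrite !H. Qed.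

Lemma good_of (A B : finType) n (M : finType) (w : M -> algC) (p : M -> bvec A B)
   (RG : bop A B) :
  (forall m, 0 <= w m) -> (forall x y, RG x y = \sum_m w m * p m x * (p m y)^*) ->
  pseudo_n_copy_undistillable n RG ->
  forall phi, (schmidt_rank phi <= 2)%N ->
     0 <= qform (tens_pow (n:=n) (ptrans RG)) phi.
Proof.
move=> hw hR hyp phi; rewrite leq_eqVlt => /orP[/eqP h2|h1].
  by rewrite -(qform_ext _ (@ptrans_tens _ _ n RG)); apply: hyp.
have [u [v huv]] := rank_le1_prod h1.
rewrite (qform_extv _ huv) -(qform_ext _ (@ptrans_tens _ _ n RG)).
rewrite qform_ptrans_prod.
exact: (psd_tens hw hR).
Qed.

Lemma sum_delta (T : finType) (p : T) (F : T -> algC) :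
  \sum_(a : T) (a == p)%:R * F a = F p.
Proof.
rewrite (bigD1 p) //= eqxx mul1r big1 ?addr0 // => a /negPf ->.
by rewrite mul0r.
Qed.

Lemma sum4_delta (A B : finType) (F : A -> B -> A -> B -> algC) p1 p2 q1 q2 :
  \sum_a \sum_b \sum_a' \sum_b'
    ((a == p1)%:R * (b == p2)%:R * (a' == q1)%:R * (b' == q2)%:R) * F a b a' b'
  = F p1 p2 q1 q2.
Proof.
transitivity (\sum_a \sum_b \sum_a' \sum_b' (b' == q2)%:R * ((a' == q1)%:R *
   ((b == p2)%:R * ((a == p1)%:R * F a b a' b')))).
  apply: eq_bigr => a _; apply: eq_bigr => b _; apply: eq_bigr => a' _.
  by apply: eq_bigr => b' _; ring.
under eq_bigr => a _ do under eq_bigr => b _ do under eq_bigr => a' _ do rewrite sum_delta.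
under eq_bigr => a _ do under eq_bigr => b _ do rewrite sum_delta.
under eq_bigr => a _ do rewrite sum_delta.
by rewrite sum_delta.
Qed.

Section Term.
Variables (A B Mi : finType) (n : nat).
Variables (XG : bop A B) (z1 : A) (z2 : B).
Hypothesis hz : 0 < XG (z1, z2) (z1, z2).
Variables (e : Mi -> A -> algC) (f : Mi -> B -> algC).

Definition Zt (o : option Mi) (x y : A * B) : algC :=
  match o with
  | None => XG x y
  | Some m => e m x.1 * f m x.2 * (e m y.1 * f m y.2)^*
  end.

Definition Ct (o : option Mi) : algC :=
  if o is Some _ then XG (z1, z2) (z1, z2) else 1.

Definition lA (o : option Mi) (a a' : A) : algC :=
  match o with
  | None => (a == a')%:R
  | Some m => (a == z1)%:R * (e m a')^*
  end.
Definition lB (o : option Mi) (b b' : B) : algC :=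
  match o with
  | None => (b == b')%:R
  | Some m => (b == z2)%:R * (f m b')^*
  end.

Lemma per_copy o p1 p2 q1 q2 :
  \sum_a \sum_b \sum_a' \sum_b'
     (lA o a p1 * lB o b p2)^* * XG (a, b) (a', b') * (lA o a' q1 * lB o b' q2)
  = Ct o * Zt o (p1, p2) (q1, q2).
Proof.
case: o => [m|] /=.
  transitivity ((fun a b a' b' => e m p1 * f m p2 * XG (a, b) (a', b') *
      (e m q1 * f m q2)^*) z1 z2 z1 z2); last by rewrite /=; ring.
  apply: eq_trans _ (sum4_delta (fun a b a' b' => e m p1 * f m p2 * XG (a, b) (a', b') *
      (e m q1 * f m q2)^*) z1 z2 z1 z2).
  apply: eq_bigr => a _; apply: eq_bigr => b _; apply: eq_bigr => a' _.
  apply: eq_bigr => b' _.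
  rewrite !rmorphM /= !conjCK !conjC_nat; ring.
rewrite mul1r.
apply: eq_trans _ (sum4_delta (fun a b a' b' => XG (a, b) (a', b')) p1 p2 q1 q2).
apply: eq_bigr => a _; apply: eq_bigr => b _; apply: eq_bigr => a' _.
apply: eq_bigr => b' _.
rewrite !rmorphM /= !conjC_nat; ring.
Qed.

Lemma term_nonneg (s : 'I_n -> option Mi) :
  (forall phi, (schmidt_rank phi <= 2)%N -> 0 <= qform (tens_pow (n:=n) XG) phi) ->
  forall phi : bvec {ffun 'I_n -> A} {ffun 'I_n -> B}, (schmidt_rank phi <= 2)%N ->
  0 <= qform (fun x y : {ffun 'I_n -> A} * {ffun 'I_n -> B} => \prod_(k < n) Zt (s k) (x.1 k, x.2 k) (y.1 k, y.2 k)) phi.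
Proof.
move=> good phi hphi.
pose L := fun (xa ya : {ffun 'I_n -> A}) => \prod_k lA (s k) (xa k) (ya k).
pose M := fun (xb yb : {ffun 'I_n -> B}) => \prod_k lB (s k) (xb k) (yb k).
have hq := good (loc L M phi) (leq_trans (schmidt_rank_loc _ _ _) hphi).
have key : qform (tens_pow (n:=n) XG) (loc L M phi) =
    (\prod_k Ct (s k)) *
    qform (fun x y : {ffun 'I_n -> A} * {ffun 'I_n -> B} => \prod_(k < n) Zt (s k) (x.1 k, x.2 k) (y.1 k, y.2 k)) phi.
  rewrite qform_loc -qform_scale; apply: eq_bigr => x' _; apply: eq_bigr => y' _.
  congr (_ * _ * _).
  rewrite /L /M (kernel_tens (fun k => lA (s k)) (fun k => lB (s k))).
  rewrite -big_split /=; apply: eq_bigr => k _.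
  exact: per_copy.
move: hq; rewrite key pmulr_rge0 //.
apply: prodr_gt0 => k _; rewrite /Ct; case: (s k) => //.
Qed.
End Term.
Section Closed.
Variable d : nat.
Implicit Types p q r t : 'I_d.

Lemma ketE (i j : 'I_d) (x : 'I_d * 'I_d) : ket i j x = (x.1 == i)%:R * (x.2 == j)%:R.
Proof. by case: x => a b; rewrite /ket xpair_eqE /=; case: (a == i); case: (b == j); rewrite /= ?mulr1 ?mul0r ?mulr0. Qed.

Definition E1 (u v : 'I_d * 'I_d) := \sum_(i < d) proj (ket i i) u v.
Definition Es (s : algC) (u v : 'I_d * 'I_d) :=
  \sum_(i < d) \sum_(j < d | (i < j)%N) proj (psi s i j) u v.

Lemma rhoE b c u v : rho_bc d b c u v = coef_a d b c * E1 u v + b * Es (-1) u v + c * Es 1 u v.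
Proof. by []. Qed.

Lemma E1E p q r t : E1 (p, q) (r, t) = (p == q)%:R * (p == r)%:R * (p == t)%:R.
Proof.
rewrite /E1.
under eq_bigr => i _ do rewrite /proj !ketE /= rmorphM /= !conjC_nat.
transitivity (\sum_i ((i == p)%:R : algC) * ((q == p)%:R * (r == p)%:R * (t == p)%:R)).
  apply: eq_bigr => i _; rewrite [p == i]eq_sym.
  case: (eqVneq i p) => [->|_]; rewrite ?eqxx /=; ring.
by rewrite sum_delta [q == p]eq_sym [r == p]eq_sym [t == p]eq_sym.
Qed.

Lemma sum_lt_delta (a b : 'I_d) (F : 'I_d -> 'I_d -> algC) :
  \sum_(i < d) \sum_(j < d | (i < j)%N) (a == i)%:R * (b == j)%:R * F i j = (a < b)%:R * F a b.
Proof.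
rewrite (bigD1 a) //= [X in _ + X]big1 ?addr0 => [|i hi]; last first.
  by apply: big1 => j _; rewrite eq_sym (negPf hi) !mul0r.
rewrite big_mkcond /=.
transitivity (\sum_(j < d) (j == b)%:R * ((a < j)%:R * F a j)).
  apply: eq_bigr => j _; rewrite eqxx [b == j]eq_sym.
  by case: (a < j)%N; rewrite /=; ring.
by rewrite sum_delta.
Qed.

Lemma lt_ne p q : (p < q)%:R + (q < p)%:R = (p != q)%:R :> algC.
Proof.
case: (ltngtP p q) => h.
- have hn : (p != q) by rewrite -(inj_eq val_inj) /= neq_ltn h.
  by rewrite hn /= addr0.
- have hn : (p != q) by rewrite -(inj_eq val_inj) /= neq_ltn h ?orbT.
  by rewrite hn /= add0r.
- by move/val_inj: h => ->; rewrite eqxx /= addr0.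
Qed.

Lemma sqrt2_sq : (sqrtC 2)^-1 * ((sqrtC 2)^-1)^* = 2^-1 :> algC.
Proof.
rewrite fmorphV /= geC0_conj ?sqrtC_ge0 ?ler0n // -invfM -expr2 sqrtCK.
by [].
Qed.

Lemma EsE s p q r t : s * s = 1 -> s^* = s ->
  Es s (p, q) (r, t) = 2^-1 * (p != q)%:R *
     ((p == r)%:R * (q == t)%:R + s * ((p == t)%:R * (q == r)%:R)).
Proof.
move=> hs hc.
transitivity (2^-1 * (
  \sum_(i < d) \sum_(j < d | (i < j)%N) (p == i)%:R * (q == j)%:R *
      ((r == i)%:R * (t == j)%:R + s * ((r == j)%:R * (t == i)%:R)) +
  \sum_(i < d) \sum_(j < d | (i < j)%N) (q == i)%:R * (p == j)%:R *
      (s * ((r == i)%:R * (t == j)%:R) + s * s * ((r == j)%:R * (t == i)%:R)))).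
  rewrite -big_split mulr_sumr; apply: eq_bigr => i _.
  rewrite -big_split mulr_sumr; apply: eq_bigr => j _.
  rewrite /proj /psi !ketE /= !rmorphM rmorphD /= !rmorphM /= hc !conjC_nat.
  rewrite -sqrt2_sq; ring.
rewrite !sum_lt_delta hs.
rewrite [(r == q)%:R * _]mulrC [(t == p)%:R * _]mulrC -(lt_ne p q).
rewrite [p == r]eq_sym [q == t]eq_sym [p == t]eq_sym [q == r]eq_sym; ring.
Qed.
End Closed.
Lemma four_phase (a1 b1 a2 b2 a3 b3 a4 b4 : algC) :
  \sum_(k < 4) ((a1 + 'i ^+ k * b1) * (a2 - (- 'i) ^+ k * b2) *
                ((a3 + (- 'i) ^+ k * b3) * (a4 - 'i ^+ k * b4))) =
  4 * (a1*a2*a3*a4 + b1*b2*b3*b4 - b1*b2*a3*a4 - a1*a2*b3*b4 + b1*a2*b3*a4 + a1*b2*a3*b4).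
Proof.
rewrite !big_ord_recr big_ord0 /=.
have w2 : ('i : algC) ^+ 2 = -1 := sqrCi _.
have w3 : ('i : algC) ^+ 3 = - 'i by rewrite exprS w2 mulrN1.
have m2 : (- ('i : algC)) ^+ 2 = -1 by rewrite sqrrN.
have m3 : (- ('i : algC)) ^+ 3 = 'i by rewrite exprS m2 mulrN1 opprK.
rewrite w3 m3 w2 m2.
set w : algC := 'i.
transitivity (
  (a1 + b1) * (a2 - b2) * ((a3 + b3) * (a4 - b4)) +
  (a1 - b1) * (a2 + b2) * ((a3 - b3) * (a4 + b4)) +
  2 * (a1*a2*a3*a4 + (b1*b2*a3*a4 + a1*a2*b3*b4 - b1*a2*b3*a4 - b1*a2*a3*b4
        - a1*b2*b3*a4 - a1*b2*a3*b4) * w ^+ 2 + b1*b2*b3*b4 * (w ^+ 2) ^+ 2)).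
  ring.
rewrite /w w2; ring.
Qed.
Section Sums.
Variable d : nat.
Implicit Types a b c e : 'I_d.

Lemma S2 a b : \sum_(i < d) ((a == i)%:R * (b == i)%:R : algC) = (a == b)%:R.
Proof.
transitivity (\sum_(i < d) (i == a)%:R * ((b == a)%:R : algC)).
  by apply: eq_bigr => i _; case: (eqVneq i a) => [->|/negPf h]; rewrite ?eqxx ?(eq_sym a) ?h ?mul0r ?mulr0 ?mul1r.
by rewrite sum_delta eq_sym.
Qed.

Lemma S4 a b c e : \sum_(i < d) ((a == i)%:R * (b == i)%:R * (c == i)%:R * (e == i)%:R : algC)
   = (a == b)%:R * (a == c)%:R * (a == e)%:R.
Proof.
transitivity (\sum_(i < d) (i == a)%:R * ((b == a)%:R * (c == a)%:R * (e == a)%:R : algC)).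
  apply: eq_bigr => i _; case: (eqVneq i a) => [->|/negPf h]; rewrite ?eqxx ?(eq_sym a) ?h /=; ring.
by rewrite sum_delta (eq_sym b) (eq_sym c) (eq_sym e).
Qed.

Lemma S22 a b c e : \sum_(i < d) \sum_(j < d)
   ((a == i)%:R * (b == i)%:R * ((c == j)%:R * (e == j)%:R) : algC)
   = (a == b)%:R * (c == e)%:R.
Proof. by rewrite -big_distrlr /= !S2. Qed.

Lemma sum_cst (x : algC) : \sum_(j < d) x = d%:R * x.
Proof. by rewrite sumr_const card_ord mulr_natl. Qed.

Lemma offdiag (H : 'I_d -> 'I_d -> algC) :
  \sum_(i < d) \sum_(j < d) (i != j)%:R * H i j =
  \sum_(i < d) \sum_(j < d) H i j - \sum_(i < d) H i i.
Proof.
rewrite -sumrB; apply: eq_bigr => i _.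
transitivity (\sum_(j < d) (H i j - (j == i)%:R * H i j)).
  by apply: eq_bigr => j _; rewrite eq_sym; case: (j == i); rewrite /=; ring.
by rewrite sumrB (sum_delta i (fun j => H i j)).
Qed.

Lemma dsumD (F G : 'I_d -> 'I_d -> algC) :
  \sum_(i < d) \sum_(j < d) (F i j + G i j) =
  \sum_(i < d) \sum_(j < d) F i j + \sum_(i < d) \sum_(j < d) G i j.
Proof. by rewrite -big_split; apply: eq_bigr => i _; rewrite big_split. Qed.

Lemma dsumN (F : 'I_d -> 'I_d -> algC) :
  \sum_(i < d) \sum_(j < d) (- F i j) = - \sum_(i < d) \sum_(j < d) F i j.
Proof. by rewrite -sumrN; apply: eq_bigr => i _; rewrite sumrN. Qed.

Lemma dsumZ (c : algC) (F : 'I_d -> 'I_d -> algC) :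
  \sum_(i < d) \sum_(j < d) (c * F i j) = c * \sum_(i < d) \sum_(j < d) F i j.
Proof. by rewrite mulr_sumr; apply: eq_bigr => i _; rewrite mulr_sumr. Qed.

Lemma sum_cst2 (F : 'I_d -> algC) :
  \sum_(i < d) \sum_(j < d) F j = d%:R * \sum_(j < d) F j.
Proof. by rewrite sum_cst. Qed.

Definition six (x1 x2 y1 y2 i j : 'I_d) : algC :=
  let a1 := (x1 == i)%:R in let b1 := (x1 == j)%:R in
  let a2 := (x2 == i)%:R in let b2 := (x2 == j)%:R in
  let a3 := (y1 == i)%:R in let b3 := (y1 == j)%:R in
  let a4 := (y2 == i)%:R in let b4 := (y2 == j)%:R in
  a1*a2*a3*a4 + b1*b2*b3*b4 - b1*b2*a3*a4 - a1*a2*b3*b4 + b1*a2*b3*a4 + a1*b2*a3*b4.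

Lemma six_sum x1 x2 y1 y2 :
  \sum_(i < d) \sum_(j < d) six x1 x2 y1 y2 i j =
  2 * d%:R * ((x1 == x2)%:R * (x1 == y1)%:R * (x1 == y2)%:R)
  - 2 * ((x1 == x2)%:R * (y1 == y2)%:R) + 2 * ((x1 == y1)%:R * (x2 == y2)%:R).
Proof.
transitivity (\sum_(i < d) \sum_(j < d) (
   ((x1 == i)%:R * (x2 == i)%:R * (y1 == i)%:R * (y2 == i)%:R : algC)
 + (x1 == j)%:R * (x2 == j)%:R * (y1 == j)%:R * (y2 == j)%:R
 - (y1 == i)%:R * (y2 == i)%:R * ((x1 == j)%:R * (x2 == j)%:R)
 - (x1 == i)%:R * (x2 == i)%:R * ((y1 == j)%:R * (y2 == j)%:R)
 + (x2 == i)%:R * (y2 == i)%:R * ((x1 == j)%:R * (y1 == j)%:R)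
 + (x1 == i)%:R * (y1 == i)%:R * ((x2 == j)%:R * (y2 == j)%:R))).
  by apply: eq_bigr => i _; apply: eq_bigr => j _; rewrite /six; ring.
rewrite !dsumD !dsumN !S22.
rewrite sum_cst2.
under eq_bigr => i _ do rewrite sum_cst.
rewrite -!mulr_sumr !S4; ring.
Qed.

Lemma six_diag x1 x2 y1 y2 :
  \sum_(i < d) six x1 x2 y1 y2 i i =
  2 * ((x1 == x2)%:R * (x1 == y1)%:R * (x1 == y2)%:R).
Proof.
rewrite -S4 mulr_sumr; apply: eq_bigr => i _; rewrite /six; ring.
Qed.
End Sums.
Lemma sum_option (T : finType) (F : option T -> algC) :
  \sum_(o : option T) F o = F None + \sum_(m : T) F (Some m).
Proof.
rewrite (bigD1 None) //=; congr (_ + _).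
rewrite (reindex_omap Some id) /=; last by case.
by apply: eq_bigl => m; rewrite eqxx.
Qed.
Section DecB.
Variable d : nat.
Hypothesis hd : (2 <= d)%N.
Definition Md : algC := d%:R * (d%:R - 1).

Lemma d_neq0 : (d%:R : algC) != 0.
Proof. by rewrite pnatr_eq0 -lt0n (leq_trans _ hd). Qed.
Lemma d1_neq0 : (d%:R - 1 : algC) != 0.
Proof.
have -> : (d%:R - 1 : algC) = (d - 1)%:R by rewrite natrB ?(leq_trans _ hd).
by rewrite pnatr_eq0 subn_eq0 -ltnNge.
Qed.

Definition eB (m : ('I_d * 'I_d) * 'I_4) (p : 'I_d) : algC :=
  (p == m.1.1)%:R + 'i ^+ m.2 * (p == m.1.2)%:R.
Definition fB (m : ('I_d * 'I_d) * 'I_4) (q : 'I_d) : algC :=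
  (q == m.1.1)%:R - (- 'i) ^+ m.2 * (q == m.1.2)%:R.
Definition wB (m : ('I_d * 'I_d) * 'I_4) : algC := (m.1.1 != m.1.2)%:R / (16 * Md).

Lemma decompB x1 x2 y1 y2 :
  \sum_(m : ('I_d * 'I_d) * 'I_4) wB m * (eB m x1 * fB m x2 * (eB m y1 * fB m y2)^*) =
  (2 * d%:R)^-1 * ((x1 == x2)%:R * (x1 == y1)%:R * (x1 == y2)%:R)
  + (2 * Md)^-1 * ((x1 == y1)%:R * (x2 == y2)%:R - (x1 == x2)%:R * (y1 == y2)%:R).
Proof.
rewrite sum_pair sum_pair.
transitivity ((16 * Md)^-1 * \sum_(i < d) \sum_(j < d) (i != j)%:R * (4 * six x1 x2 y1 y2 i j)).
  rewrite mulr_sumr; apply: eq_bigr => i _; rewrite mulr_sumr; apply: eq_bigr => j _.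
  rewrite /wB /eB /fB /=.
  under eq_bigr => k _ do rewrite !rmorphM !rmorphD ?rmorphN !rmorphM /= !rmorphXn /= !conjC_nat ?rmorphN /= !conjCi ?opprK.
  rewrite -mulr_sumr four_phase /six; ring.
rewrite offdiag dsumZ -mulr_sumr six_sum six_diag.
rewrite /Md; field.
by rewrite d_neq0 d1_neq0.
Qed.

Definition eK (m : 'I_d * 'I_d) (p : 'I_d) : algC := (p == m.1)%:R.
Definition fK (m : 'I_d * 'I_d) (q : 'I_d) : algC := (q == m.2)%:R.
Definition wK (m : 'I_d * 'I_d) : algC := (m.1 != m.2)%:R / Md.

Lemma decompK x1 x2 y1 y2 :
  \sum_(m : 'I_d * 'I_d) wK m * (eK m x1 * fK m x2 * (eK m y1 * fK m y2)^*) =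
  Md^-1 * ((x1 == y1)%:R * (x2 == y2)%:R - (x1 == x2)%:R * (x1 == y1)%:R * (x1 == y2)%:R).
Proof.
rewrite sum_pair.
transitivity (Md^-1 * \sum_(i < d) \sum_(j < d) (i != j)%:R *
   ((x1 == i)%:R * (y1 == i)%:R * ((x2 == j)%:R * (y2 == j)%:R))).
  rewrite mulr_sumr; apply: eq_bigr => i _; rewrite mulr_sumr; apply: eq_bigr => j _.
  rewrite /wK /eK /fK /= !rmorphM /= !conjC_nat; ring.
rewrite offdiag S22.
congr (_ * (_ - _)).
rewrite -S4; apply: eq_bigr => i _; ring.
Qed.
End DecB.
Lemma main_generic (A B Mi : finType) n (XG Y : bop A B) (z1 : A) (z2 : B)
   (e : Mi -> A -> algC) (f : Mi -> B -> algC) (w : Mi -> algC) (c0 : algC) :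
  0 < XG (z1, z2) (z1, z2) -> 0 <= c0 -> (forall m, 0 <= w m) ->
  (forall x y, Y x y = c0 * XG x y +
      \sum_m w m * (e m x.1 * f m x.2 * (e m y.1 * f m y.2)^*)) ->
  (forall phi, (schmidt_rank phi <= 2)%N -> 0 <= qform (tens_pow (n:=n) XG) phi) ->
  forall phi, (schmidt_rank phi <= 2)%N -> 0 <= qform (tens_pow (n:=n) Y) phi.
Proof.
move=> hz hc0 hw hY good phi hphi.
pose Wt (o : option Mi) := if o is Some m then w m else c0.
have hY' : forall x y, Y x y = \sum_(o : option Mi) Wt o * Zt XG e f o x y.
  by move=> x y; rewrite sum_option hY.
have E : forall x y, tens_pow (n:=n) Y x y =
   \sum_(s : {ffun 'I_n -> option Mi}) (\prod_k Wt (s k)) *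
      \prod_k Zt XG e f (s k) (x.1 k, x.2 k) (y.1 k, y.2 k).
  move=> x y; rewrite /tens_pow.
  under eq_bigr => k _ do rewrite hY'.
  rewrite bigA_distr_bigA; apply: eq_bigr => s _.
  by rewrite big_split.
rewrite (qform_ext _ E) qform_sum; apply: sumr_ge0 => s _.
rewrite qform_scale; apply: mulr_ge0.
  by apply: prodr_ge0 => k _; rewrite /Wt; case: (s k).
exact: (term_nonneg hz e f (fun k => s k) good).
Qed.
Section Final.
Variable d : nat.
Hypothesis hd : (2 <= d)%N.

Definition Nd : algC := d%:R * (2 * d%:R - 1).

Lemma Md_nat : Md d = (d * (d - 1))%:R.
Proof. by rewrite /Md natrM natrB ?(leq_trans _ hd). Qed.
Lemma Nd_nat : Nd = (d * (2 * d - 1))%:R.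
Proof.
by rewrite /Nd natrM natrB ?natrM //; lia.
Qed.
Lemma Md_gt0 : 0 < Md d.
Proof. rewrite Md_nat ltr0n muln_gt0; lia. Qed.
Lemma Nd_gt0 : 0 < Nd.
Proof.
rewrite Nd_nat ltr0n muln_gt0; lia.
Qed.
Lemma Nd_neq0 : Nd != 0. Proof. by rewrite gt_eqF // Nd_gt0. Qed.
Lemma d2_neq0 : (2 * d%:R - 1 : algC) != 0.
Proof. by move: Nd_neq0; rewrite /Nd mulf_eq0 negb_or => /andP[]. Qed.


Definition RI := ('I_d + (('I_d * 'I_d) + ('I_d * 'I_d)))%type.
Definition wR (b c : algC) (m : RI) : algC :=
  match m with
  | inl _ => coef_a d b c
  | inr (inl ij) => b * (ij.1 < ij.2)%N%:R
  | inr (inr ij) => c * (ij.1 < ij.2)%N%:R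
  end.
Definition pR (m : RI) : bvec 'I_d 'I_d :=
  match m with
  | inl i => ket i i
  | inr (inl ij) => psi (-1) ij.1 ij.2
  | inr (inr ij) => psi 1 ij.1 ij.2
  end.

Lemma rho_psd b c x y : rho_bc d b c x y = \sum_(m : RI) wR b c m * pR m x * (pR m y)^*.
Proof.
rewrite big_sumType big_sumType /= !sum_pair /= addrA /rho_bc.
congr (_ + _ + _).
- by rewrite mulr_sumr; apply: eq_bigr => i _; rewrite /proj mulrA.
- rewrite mulr_sumr; apply: eq_bigr => i _; rewrite big_mkcond mulr_sumr /=.
  by apply: eq_bigr => j _; case: (i < j)%N; rewrite /proj /=; ring.
- rewrite mulr_sumr; apply: eq_bigr => i _; rewrite big_mkcond mulr_sumr /=.
  by apply: eq_bigr => j _; case: (i < j)%N; rewrite /proj /=; ring.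
Qed.

Lemma wR_ge0 b c m : 0 <= coef_a d b c -> 0 <= b -> 0 <= c -> 0 <= wR b c m.
Proof.
move=> ha hb hc; case: m => [i|[ij|ij]] //=; apply: mulr_ge0 => //; exact: ler0n.
Qed.


Lemma coefG : coef_a d (ptG d).1 (ptG d).2 = Nd^-1.
Proof.
rewrite /coef_a /ptG /= -/Nd.
have h1 := d_neq0 hd; have h2 := d2_neq0; have h3 := Nd_neq0.
rewrite /Nd in h3 *; field.
by rewrite h1 h2.
Qed.

Lemma EsE' (s : algC) (p q r t : 'I_d) : s * s = 1 -> s^* = s ->
  Es s (p, q) (r, t) = 2^-1 * (p != q)%:R *
     ((p == r)%:R * (q == t)%:R + s * ((p == t)%:R * (q == r)%:R)).
Proof. exact: EsE. Qed.

Lemma XG_pos (z1 z2 : 'I_d) : z1 != z2 ->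
  0 < ptrans (rho_bc d (ptG d).1 (ptG d).2) (z1, z2) (z1, z2).
Proof.
move=> hz; rewrite /ptrans /= rhoE E1E !EsE ?mulN1r ?opprK ?mulr1 ?rmorphN ?rmorph1 //.
rewrite (negPf hz) !eqxx /= -/Nd.
rewrite (_ : _ + _ + _ = 2 / Nd).
  by rewrite divr_gt0 ?ltr0n ?Nd_gt0.
  have h3 := Nd_neq0; field.
  by [].
Qed.

Definition MT := ((('I_d * 'I_d) * 'I_4) + ('I_d * 'I_d))%type.
Definition eT (m : MT) := match m with inl m => eB m | inr m => eK m end.
Definition fT (m : MT) := match m with inl m => fB m | inr m => fK m end.
Definition wT (l1 l3 : algC) (m : MT) :=
  match m with inl m => l1 * wB m | inr m => l3 * wK (d:=d) m end.

Lemma decomp_main l1 l2 l3 b c : l1 + l2 + l3 = 1 ->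
  b = l1 * (ptB d).1 + l2 * (ptG d).1 + l3 * (ptK d).1 ->
  c = l1 * (ptB d).2 + l2 * (ptG d).2 + l3 * (ptK d).2 ->
  forall x y, ptrans (rho_bc d b c) x y =
    l2 * ptrans (rho_bc d (ptG d).1 (ptG d).2) x y +
    \sum_(m : MT) wT l1 l3 m * (eT m x.1 * fT m x.2 * (eT m y.1 * fT m y.2)^*).
Proof.
move=> hl hb hc [x1 x2] [y1 y2].
rewrite big_sumType /=.
under eq_bigr do rewrite -mulrA.
rewrite -mulr_sumr decompB //.
under eq_bigr do rewrite -mulrA.
rewrite -mulr_sumr decompK.
rewrite /ptrans /= !rhoE !E1E !EsE ?mulN1r ?opprK ?mulr1 ?rmorphN ?rmorph1 //.
rewrite {}hb {}hc /ptB /ptG /ptK /=.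
have -> : l3 = 1 - l1 - l2 by rewrite -hl; ring.
have h1 := d_neq0 hd; have h2 := d2_neq0; have h4 := d1_neq0 hd.
have h5 : (2 : algC) != 0 by rewrite pnatr_eq0.
case: (eqVneq x1 y2) => [<-|hne].
  rewrite ?eqxx (eq_sym x2 x1) (eq_sym y1 x1) /= /coef_a /Md.
  field; by rewrite h1 h2 h4.
rewrite ?(negPf hne) ?(eq_sym y2 x2) ?(eq_sym y2 y1) /= /coef_a /Md.
field; by rewrite h1 h2 h4.
Qed.
End Final.

Unset Implicit Arguments.
Theorem lemma4 (d n : nat) (b c : algC) :
  (2 <= d)%N -> (1 <= n)%N ->
  pseudo_n_copy_undistillable n (rho_bc d (ptG d).1 (ptG d).2) ->
  in_triangle (ptB d) (ptG d) (ptK d) b c ->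
  pseudo_n_copy_undistillable n (rho_bc d b c).
Proof.
move=> hd _ hyp [l1 [l2 [l3 [[h1 h2 h3 hl] [hb hc]]]]] phi hphi.
rewrite (qform_ext _ (@ptrans_tens _ _ n (rho_bc d b c))).
have h0d : (0 < d)%N by apply: ltn_trans hd.
pose z1 : 'I_d := Ordinal h0d.
pose z2 : 'I_d := Ordinal hd.
have hz : z1 != z2 by [].
have hN := Nd_gt0 hd.
have hM := Md_gt0 hd.
apply: (main_generic (XG := ptrans (rho_bc d (ptG d).1 (ptG d).2)) (z1 := z1) (z2 := z2)
   (e := eT (d:=d)) (f := fT (d:=d)) (w := wT l1 l3) (c0 := l2)).
- exact (XG_pos hd hz).
- exact: h2.
- case=> m /=; apply: mulr_ge0 => //; apply: divr_ge0; rewrite ?ler0n //.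
    by apply: mulr_ge0; rewrite ?ler0n ?ltW.
  by rewrite ltW.
- exact: decomp_main.
- apply: (good_of (w := wR (d:=d) (ptG d).1 (ptG d).2) (p := @pR d)) => //.
    move=> m; apply: wR_ge0.
    + by rewrite coefG // invr_ge0 ltW.
    + by rewrite /ptG /= divr_ge0 ?ler0n ?ltW.
    + by rewrite /ptG /= divr_ge0 ?ler0n ?ltW.
  exact: rho_psd.
- by rewrite hphi.
Qed.
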